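(* Let $\delta=x^{\mathbf d}f(\theta)$ be a homogeneous differential operator of degree $\mathbf d$ with $\mathbf d\neq\mathbf 0$ and $-\mathbf d\in S$. Let $\mathcal B\subseteq\mathbb N^n$ be compatible with $\mathbf d$ and such that $\delta$ fixes the ideal $I_{\mathcal B}=(x^{\mathbf a}\mid\mathbf a\in V'_{\mathrm{mon}}(f)\cap W_{\mathcal B})$. Then for every $\mathcal B'\subseteq\mathbb N^n$ compatible with $\mathbf d$ with $W_{\mathcal B'}\subseteq W_{\mathcal B}$, the ideal $I_{\mathcal B'}=(x^{\mathbf a}\mid\mathbf a\in V'_{\mathrm{mon}}(f)\cap W_{\mathcal B'})$ is $\delta$-fixed.
   Context: Standing notation. Fix $d\ge 1$. Let $\sigma\subseteq\mathbb R^d$ be a full-dimensional, strongly convex rational polyhedral cone, so $\sigma^\vee$ is full-dimensional and strongly convex. $S=\sigma^\vee\cap\mathbb Z^d$, $R=\mathbb C[S]$ with monomial basis $x^{\mathbf a}$, $\mathbf a\in S$. $h_1,\dots,h_n$ are the primitive support functions of the facets of $\sigma^\vee$, so $S=\{\mathbf a\in\mathbb Z^d:h_i(\mathbf a)\ge0\ \forall i\}$. $(g,m)!=\prod_{j=0}^m(g-j)$ for $m\ge0$, $=1$ for $m<0$; $H_{\mathbf d}=\prod_i(h_i,h_i(-\mathbf d)-1)!$. For $f$ divisible by $H_{\mathbf d}$, $\delta=x^{\mathbf d}f(\theta)$ acts by $\delta(x^{\mathbf a})=f(\mathbf a)x^{\mathbf a+\mathbf d}$. $I$ is $\delta$-fixed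 if $\delta(I)=I$. $V_{\mathrm{mon}}(f)=\{\mathbf a\in\mathbb Z^d:f(\mathbf a)=0\}$. Write $\mathbf d=q\mathbf e$ with $q\in\mathbb Z_{\ge1}$, $\mathbf e$ primitive. For $\mathbf a\in\mathbb Z^d$, $\operatorname{val}(\mathbf a)=\inf\{t\in\mathbb R:\mathbf a+t\mathbf d\in V_{\mathrm{mon}}(f)\}\in\mathbb R\cup\{\pm\infty\}$ ($\inf\emptyset=+\infty$). When $\operatorname{val}(\mathbf a)$ is finite, $\operatorname{pval}(\mathbf a)=\max\{t\in[\operatorname{val}(\mathbf a),\operatorname{val}(\mathbf a)+1):\mathbf a+t\mathbf d\in V_{\mathrm{mon}}(f)\}$ and $\operatorname{vpt}(\mathbf a)=\mathbf a+\operatorname{pval}(\mathbf a)\mathbf d$. $V'_{\mathrm{mon}}(f)=\{\operatorname{vpt}(\mathbf a):\mathbf a\in\mathbb Z^d,\ \operatorname{val}(\mathbf a)\text{ finite}\}$. A tuple $\beta\in\mathbb N^n$ is compatible with $\mathbf d$ if for every $i$, $\beta_i=0$ or $h_i(\mathbf d)=0$; $\mathcal B\subseteq\mathbb N^n$ is compatible with $\mathbf d$ if each element is. $W_\beta=\{\mathbf a\in S: h_i(\mathbf a)\ge\beta_i\ \forall i\}$, $W_{\mathcal B}=\bigcup_{\beta\in\mathcal B}W_\beta$. *)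

(* Defs.v *)
From HB Require Import structures.
From mathcomp Require Import all_boot all_order all_algebra.
From mathcomp Require Import complex.
From mathcomp Require Import Rstruct.
From mathcomp Require Import mpoly.
From Stdlib Require Import Rdefinitions.
Set Implicit Arguments. Unset Strict Implicit. Unset Printing Implicit Defensive.
Import Order.TTheory GRing.Theory Num.Theory.
Local Open Scope ring_scope.

Notation RR := Rdefinitions.R.
Definition CC : Type := RR[i].

Definition vec (d : nat) := 'rV[int]_d.

Definition hval d (u a : vec d) : int := \sum_(j < d) u 0 j * a 0 j.

Definition primitive_vec d (u : vec d) : Prop :=
  forall k : int, (forall j, u 0 j \in dvdz k) -> `|k| = 1.

(* h_1..h_n are exactly the primitive inner normals (support functions) of the
   facets of the cone sigma^vee = {x in R^d | h_i(x) >= 0 for all i}, where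
   sigma^vee is full-dimensional and strongly convex (equivalently sigma is a
   full-dimensional strongly convex rational polyhedral cone). *)
Definition dual_cone_facets d n (h : 'I_n -> vec d) : Prop :=
  [/\ (forall i, primitive_vec (h i)),
      (* sigma^vee full-dimensional: it has an interior point *)
      (exists a : vec d, forall i, 0 < hval (h i) a),
      (* sigma^vee strongly convex: contains no line *)
      (forall a : vec d, (forall i, hval (h i) a = 0) -> a = 0) &
      (* each h_i = 0 cuts out a facet (relative interior point avoiding the others) *)
      (forall i, exists a : vec d,
           hval (h i) a = 0 /\ forall j, j != i -> 0 < hval (h j) a)].

Definition inS d n (h : 'I_n -> vec d) (a : vec d) : Prop :=
  forall i, 0 <= hval (h i) a.

(* Elements of R = C[S]: finitely supported coefficient functions
   c : Z^d -> C with support in S  (c represents sum_a c(a) x^a). *)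
Definition inCS d n (h : 'I_n -> vec d) (c : vec d -> CC) : Prop :=
  (exists s : seq (vec d), forall a, c a != 0 -> a \in s) /\
  (forall a, c a != 0 -> inS h a).

(* c * x^a, as a coefficient function *)
Definition mul_monomial d (c : vec d -> CC) (a : vec d) : vec d -> CC :=
  fun b => c (b - a).

Definition monideal d n (h : 'I_n -> vec d) (A : vec d -> Prop)
  (c : vec d -> CC) : Prop :=
  exists (k : nat) (r : 'I_k -> vec d -> CC) (g : 'I_k -> vec d),
    [/\ (forall l, inCS h (r l)), (forall l, A (g l)) &
        forall b, c b = \sum_(l < k) mul_monomial (r l) (g l) b].

Definition eval_int d (f : {mpoly CC[d]}) (a : vec d) : CC :=
  f.@[fun j => ((a 0 j)%:~R : CC)].

(* delta = x^dd f(theta):  delta(x^a) = f(a) x^(a+dd), extended linearly *)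
Definition delta d (f : {mpoly CC[d]}) (dd : vec d) (c : vec d -> CC)
  : vec d -> CC :=
  fun b => eval_int f (b - dd) * c (b - dd).

Definition delta_fixed d (f : {mpoly CC[d]}) (dd : vec d)
  (I : (vec d -> CC) -> Prop) : Prop :=
  (forall c, I c -> I (delta f dd c)) /\
  (forall c, I c -> exists c', I c' /\ forall b, delta f dd c' b = c b).

Definition hpoly d (u : vec d) : {mpoly CC[d]} :=
  \sum_(j < d) ((u 0 j)%:~R : CC) *: 'X_j.

Definition ffact_poly d (g : {mpoly CC[d]}) (m : int) : {mpoly CC[d]} :=
  match m with
  | Posz k => \prod_(j < k.+1) (g - (j%:R : CC)%:MP)
  | Negz _ => 1
  end.

Definition Hpoly d n (h : 'I_n -> vec d) (dd : vec d) : {mpoly CC[d]} :=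
  \prod_(i < n) ffact_poly (hpoly (h i)) (hval (h i) (- dd) - 1).

Definition divisible_by_H d n (h : 'I_n -> vec d) (dd : vec d)
  (f : {mpoly CC[d]}) : Prop :=
  exists g : {mpoly CC[d]}, f = Hpoly h dd * g.

Definition Vmon d (f : {mpoly CC[d]}) (a : vec d) : Prop := eval_int f a = 0.

Definition Tset d (f : {mpoly CC[d]}) (dd a : vec d) (t : RR) : Prop :=
  exists b : vec d,
    (forall j, (a 0 j)%:~R + t * (dd 0 j)%:~R = (b 0 j)%:~R :> RR) /\ Vmon f b.

Definition is_inf (T : RR -> Prop) (v : RR) : Prop :=
  (forall t, T t -> v <= t) /\
  (forall e : RR, 0 < e -> exists t, T t /\ t < v + e).

Definition is_pval (T : RR -> Prop) (v p : RR) : Prop :=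
  [/\ T p, v <= p < v + 1 & forall t, T t -> v <= t < v + 1 -> t <= p].

Definition Vprime d (f : {mpoly CC[d]}) (dd : vec d) (b : vec d) : Prop :=
  exists (a : vec d) (v p : RR),
    [/\ is_inf (Tset f dd a) v, is_pval (Tset f dd a) v p &
        forall j, (b 0 j)%:~R = (a 0 j)%:~R + p * (dd 0 j)%:~R :> RR].

Definition compatible d n (h : 'I_n -> vec d) (dd : vec d) (beta : 'I_n -> nat)
  : Prop := forall i, beta i = 0%N \/ hval (h i) dd = 0.

Definition compatibleB d n (h : 'I_n -> vec d) (dd : vec d)
  (B : ('I_n -> nat) -> Prop) : Prop :=
  forall beta, B beta -> compatible h dd beta.

Definition Wbeta d n (h : 'I_n -> vec d) (beta : 'I_n -> nat) (a : vec d) : Prop :=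
  inS h a /\ forall i, (beta i)%:Z <= hval (h i) a.

Definition WB d n (h : 'I_n -> vec d) (B : ('I_n -> nat) -> Prop) (a : vec d)
  : Prop := exists beta, B beta /\ Wbeta h beta a.

Definition IB d n (h : 'I_n -> vec d) (f : {mpoly CC[d]}) (dd : vec d)
  (B : ('I_n -> nat) -> Prop) : (vec d -> CC) -> Prop :=
  monideal h (fun a => Vprime f dd a /\ WB h B a).

(* Main.v *)
Require Import Defs.
From HB Require Import structures.
From mathcomp Require Import all_boot all_order all_algebra.
From mathcomp Require Import complex.
From mathcomp Require Import Rstruct.
From mathcomp Require Import mpoly.
From mathcomp Require Import lra ring zify.
From Stdlib Require Import Classical.
Import Order.TTheory GRing.Theory Num.Theory.
Local Open Scope ring_scope.
Set Implicit Arguments. Unset Strict Implicit. Unset Printing Implicit Defensive.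

Section Gen.
Variables (d n : nat) (h : 'I_n -> vec d).

Lemma hvalD (u a b : vec d) : hval u (a + b) = hval u a + hval u b.
Proof. by rewrite /hval -big_split; apply: eq_bigr => j _; rewrite !mxE mulrDr. Qed.

Lemma hvalN (u a : vec d) : hval u (- a) = - hval u a.
Proof. by rewrite /hval -sumrN; apply: eq_bigr => j _; rewrite !mxE mulrN. Qed.

Lemma hvalB (u a b : vec d) : hval u (a - b) = hval u a - hval u b.
Proof. by rewrite hvalD hvalN. Qed.

Lemma inSD a b : inS h a -> inS h b -> inS h (a + b).
Proof. by move=> Ha Hb i; rewrite hvalD addr_ge0. Qed.

Definition Mset (A : vec d -> Prop) (x : vec d) := exists g, A g /\ inS h (x - g).

Lemma monideal_ext A c1 c : monideal h A c1 -> (forall b, c b = c1 b) -> monideal h A c.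
Proof. by move=> [k [r [g [H1 H2 H3]]]] E; exists k, r, g; split => // b; rewrite E. Qed.

Lemma monideal0 A : monideal h A (fun _ => 0).
Proof.
exists 0%N, (fun _ _ => 0), (fun _ => 0); split.
- move=> l; split; first by exists [::]; move=> a; rewrite eqxx.
  by move=> a; rewrite eqxx.
- by case.
- by move=> b; rewrite big_ord0.
Qed.

Lemma monideal_mono A b (a : CC) : Mset A b ->
  monideal h A (fun x => if x == b then a else 0).
Proof.
move=> [g [Ag Sbg]].
exists 1%N, (fun _ => fun y => if y == b - g then a else 0), (fun _ => g); split.
- move=> l; split.
    by exists [:: b - g]; move=> y /=; case: (y =P b - g) => [->|] _; rewrite ?mem_seq1 ?eqxx.
  by move=> y /=; case: (y =P b - g) => [->|] //; rewrite eqxx.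
- by [].
- move=> x; rewrite big_ord1 /mul_monomial.
  case: (x =P b) => [->|ne]; rewrite ?eqxx //.
  case: eqP => [E|//].
  by case: ne; move/(congr1 (fun z => z + g)): E; rewrite !subrK.
Qed.

Lemma monidealD A c1 c2 c : monideal h A c1 -> monideal h A c2 ->
  (forall b, c b = c1 b + c2 b) -> monideal h A c.
Proof.
move=> [k1 [r1 [g1 [H1 H2 H3]]]] [k2 [r2 [g2 [K1 K2 K3]]]] E.
exists (k1 + k2)%N,
  (fun l => match split l with inl i => r1 i | inr i => r2 i end),
  (fun l => match split l with inl i => g1 i | inr i => g2 i end); split.
- by move=> l; case: (split l).
- by move=> l; case: (split l).
- move=> b; rewrite E H3 K3 big_split_ord /=; congr (_ + _); apply: eq_bigr => i _.
  + by rewrite (unsplitK (inl _ i)).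
  + by rewrite (unsplitK (inr _ i)).
Qed.

Lemma monideal_char A (s : seq (vec d)) c :
  (forall x, c x != 0 -> x \in s) -> (forall x, c x != 0 -> Mset A x) ->
  monideal h A c.
Proof.
elim: s c => [|x0 s IH] c Hs HM.
  apply: (monideal_ext (monideal0 A)) => b.
  by apply/eqP; apply: contraT => /Hs.
apply: (@monidealD A (fun y => if y == x0 then c x0 else 0)
                     (fun y => if y == x0 then 0 else c y)).
- case: (boolP (c x0 == 0)) => [/eqP E|nz].
    by apply: (monideal_ext (monideal0 A)) => b; case: eqP.
  exact: monideal_mono (HM _ nz).
- apply: IH => x; case: (x =P x0) => [_|ne nz]; rewrite ?eqxx //.
    by move: (Hs _ nz); rewrite inE; case: (x =P x0).
  exact: HM.
- by move=> b; case: eqP => [->|_]; rewrite ?addr0 ?add0r.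
Qed.

Lemma monideal_supp A c x : monideal h A c -> c x != 0 -> Mset A x.
Proof.
move=> [k [r [g [H1 H2 H3]]]]; rewrite H3 => nz.
case: (pickP (fun l => r l (x - g l) != 0)) => [l Hl | H0].
  by exists (g l); split => //; apply: (proj2 (H1 l)).
move: nz; rewrite big1 ?eqxx // => l _.
by move: (H0 l) => /negbFE /eqP.
Qed.

Lemma monideal_fin A c : monideal h A c -> exists s : seq (vec d), forall x, c x != 0 -> x \in s.
Proof.
move=> [k [r [g [H1 H2 H3]]]].
have [sf Hsf] : exists sf : 'I_k -> seq (vec d), forall l x, r l x != 0 -> x \in sf l.
  exact: (@fin_all_exists 'I_k (fun _ => seq (vec d)) (fun l s => forall x, r l x != 0 -> x \in s) (fun l => proj1 (H1 l))).
exists [seq y + g l | l <- enum 'I_k, y <- sf l] => x; rewrite H3 => nz.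
case: (pickP (fun l => r l (x - g l) != 0)) => [l Hl | H0].
  have := allpairs_f_dep (fun l y => y + g l) (mem_enum predT l) (Hsf l _ Hl).
  by rewrite subrK.
move: nz; rewrite big1 ?eqxx // => l _.
by move: (H0 l) => /negbFE /eqP.
Qed.

End Gen.

Lemma exmax (P : nat -> Prop) K : P 0%N -> (forall k, P k -> (k <= K)%N) ->
  exists k, P k /\ forall k', P k' -> (k' <= k)%N.
Proof.
elim: K => [|K IH] P0 Hb.
  by exists 0%N; split => // k' /Hb.
case: (classic (P K.+1)) => [PK|nPK].
  by exists K.+1; split => // k' /Hb.
apply: IH => // k Pk; have := Hb _ Pk; rewrite leq_eqVlt; case/orP => [/eqP E|//].
by move: Pk; rewrite E.
Qed.

Section Line.
Variables (d : nat) (dd : vec d).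

Definition onl (b : vec d) (t : RR) (c : vec d) : Prop :=
  forall j, (b 0 j)%:~R + t * (dd 0 j)%:~R = (c 0 j)%:~R :> RR.

Lemma onl_hval u b t c : onl b t c ->
  (hval u c)%:~R = (hval u b)%:~R + t * (hval u dd)%:~R :> RR.
Proof.
move=> H; rewrite /hval !rmorph_sum mulr_sumr -big_split; apply: eq_bigr => j _ /=.
rewrite !intrM -H; ring.
Qed.

Lemma onl0 b : onl b 0 b.
Proof. by move=> j; rewrite mul0r addr0. Qed.

Lemma onl_add1 b t c : onl b t c -> onl b (t + 1) (c + dd).
Proof. by move=> H j; rewrite mxE intrD -H; ring. Qed.

Lemma onl_sub1 b t c : onl b t c -> onl b (t - 1) (c - dd).
Proof. by move=> H j; rewrite !mxE intrB -H; ring. Qed.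

Lemma onl_uniq b t c c' : onl b t c -> onl b t c' -> c = c'.
Proof.
move=> H H'; apply/matrixP => i j; rewrite (ord1 i).
by apply: (@intr_inj RR); rewrite -H -H'.
Qed.

Lemma onl_teq b t s c : onl b t c -> t = s -> onl b s c.
Proof. by move=> H <-. Qed.

End Line.

Lemma Mset_add d n (h : 'I_n -> vec d) A x y : Mset h A x -> inS h y -> Mset h A (x + y).
Proof. by move=> [g [Ag S]] Sy; exists g; split => //; rewrite addrAC; apply: inSD. Qed.

Section Key.
Variables (d n : nat) (h : 'I_n -> vec d) (dd : vec d) (f : {mpoly CC[d]}).
Variable (AB : vec d -> Prop).
Hypothesis Hdd : inS h (- dd).
Variables (i0 : 'I_n) (j0 : 'I_d).
Hypothesis Hi0 : hval (h i0) dd < 0.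
Hypothesis Hj0 : dd 0 j0 != 0.
Hypothesis HS : forall x, Mset h AB x -> inS h x.
Hypothesis H1 : forall x, Mset h AB x -> eval_int f x != 0 -> Mset h AB (x + dd).
Hypothesis H2 : forall x, Mset h AB x -> eval_int f (x - dd) != 0.

Let D := dd 0 j0.
Let Nn : nat := absz (D * D).
Let Nr : RR := Nn%:R.

Lemma NrE : Nr = (D * D)%:~R.
Proof. by rewrite /Nr natr_absz ger0_norm // -expr2 sqr_ge0. Qed.

Lemma Nr_gt0 : 0 < Nr.
Proof. by rewrite NrE ltr0z -expr2 exprn_even_gt0 //= Hj0. Qed.

Lemma onl_disc b t c : onl dd b t c -> exists z : int, t * Nr = z%:~R.
Proof.
move=> H; exists ((c 0 j0 - b 0 j0) * D); rewrite NrE !intrM !intrB -(H j0) /D; ring.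
Qed.

Lemma onl_S b t s c c' : onl dd b t c -> onl dd b s c' -> s <= t -> inS h (c' - c).
Proof.
move=> H H' st i; rewrite hvalB -(ler_int RR) intrB (onl_hval _ H) (onl_hval _ H').
have : 0 <= (hval (h i) (- dd))%:~R :> RR by rewrite ler0z; apply: Hdd.
rewrite hvalN intrN; nra.
Qed.

Lemma onl_down b t s c c' : onl dd b t c -> onl dd b s c' -> s <= t ->
  Mset h AB c -> Mset h AB c'.
Proof.
move=> H H' st M; have := Mset_add M (onl_S H H' st).
by rewrite addrC subrK.
Qed.


Lemma Nr_neq0 : Nr != 0.
Proof. by rewrite gt_eqF // Nr_gt0. Qed.

Lemma key b : Mset h AB b -> eval_int f b != 0 ->
  exists (v tau : RR) (c : vec d), [/\ is_inf (Tset f dd b) v,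
    is_pval (Tset f dd b) v tau, onl dd b tau c, 1 <= tau & Mset h AB c].
Proof.
move=> Mb fb.
have Npos := Nr_gt0; have Nnz := Nr_neq0.
pose P k := exists c, onl dd b (k%:R / Nr) c /\ Mset h AB c.
have HP : forall k, P k -> (k <= absz (hval (h i0) b * (D * D))%R)%N.
  move=> k [c [Hc Mc]].
  have Sc : 0 <= (hval (h i0) c)%:~R :> RR by rewrite ler0z; apply: (HS Mc i0).
  have E := onl_hval (h i0) Hc.
  have hd1 : (hval (h i0) dd)%:~R <= (-1 : int)%:~R :> RR.
    by rewrite ler_int; lia.
  have kge : 0 <= (k%:R : RR) by rewrite ler0n.
  have tN : k%:R / Nr * Nr = k%:R :> RR by rewrite divfK.
  have : (k%:R : RR) <= (hval (h i0) b * (D * D))%:~R.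
    rewrite intrM -NrE; move: E Sc hd1 kge tN; set t := k%:R / Nr; simpl.
    move=> E Sc hd1 kge tN.
    have t0 : 0 <= t by rewrite /t divr_ge0 // ltW.
    nra.
  change ((Posz k)%:~R <= (hval (h i0) b * (D * D))%:~R :> RR -> (k <= absz (hval (h i0) b * (D * D))%R)%N).
  rewrite ler_int; lia.
have P0 : P 0%N.
  by exists b; split => //; apply: (onl_teq (onl0 dd b)); rewrite mul0r.
have [kt [[ct [Hct Mct]] Hmax]] := exmax P0 HP.
pose tau := kt%:R / Nr.
have tauN : tau * Nr = kt%:R by rewrite /tau divfK.
have tau0 : 0 <= tau by rewrite /tau divr_ge0 // ?ler0n // ltW.
have F1 : forall t c, onl dd b t c -> Mset h AB c -> t <= tau.
  move=> t c Hc Mc; have [z Hz] := onl_disc Hc.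
  case: (lerP z 0) => [z0|z0].
    have : (z%:~R : RR) <= 0 by rewrite lerz0.
    nra.
  have zE : ((absz z)%:R : RR) = z%:~R by rewrite natr_absz gtr0_norm.
  have Pk : P (absz z).
    exists c; split => //; apply: (onl_teq Hc).
    by rewrite zE -Hz mulfK.
  have := Hmax _ Pk; rewrite -(ler_nat RR) zE => le.
  nra.
have F2 : forall t c, onl dd b t c -> t <= tau -> Mset h AB c.
  by move=> t c Hc le; apply: onl_down Hct Hc le Mct.
have F3 : forall t c, onl dd b t c -> tau - 1 < t -> Mset h AB c -> eval_int f c = 0.
  move=> t c Hc lt Mc; apply/eqP; apply: contraT => nz.
  have := F1 _ _ (onl_add1 Hc) (H1 Mc nz); lra.
have F4 : forall t c, onl dd b t c -> t <= tau - 1 -> eval_int f c != 0.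
  move=> t c Hc le; have M := F2 _ _ (onl_add1 Hc) ltac:(lra).
  by have := H2 M; rewrite addrK.
pose Q k := (k < Nn)%N /\ exists c, onl dd b (tau - k%:R / Nr) c.
have Q0 : Q 0%N.
  split; first by rewrite -(ltr_nat RR).
  by exists ct; apply: (onl_teq Hct); rewrite mul0r subr0.
have HQ : forall k, Q k -> (k <= Nn.-1)%N.
  by move=> k [kN _]; lia.
have [km [[kmN [cv Hcv]] Hkm]] := exmax Q0 HQ.
pose v := tau - km%:R / Nr.
have vN : v * Nr = kt%:R - km%:R by rewrite /v mulrBl tauN divfK.
have kmr : (km%:R : RR) < Nr by rewrite ltr_nat.
have km0 : 0 <= (km%:R : RR) by rewrite ler0n.
have vlo : tau - 1 < v by nra.
have vhi : v <= tau by nra.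
have F5 : forall t c, onl dd b t c -> tau - 1 < t -> t <= tau -> v <= t.
  move=> t c Hc lo hi; have [z Hz] := onl_disc Hc.
  pose w := (kt%:Z - z).
  have wR : (w%:~R : RR) = kt%:R - z%:~R by rewrite intrB.
  have w0 : 0 <= w by rewrite -(ler_int RR) wR; nra.
  have wN : w < Nn%:Z by rewrite -(ltr_int RR) wR; change (kt%:R - z%:~R < Nr); nra.
  have zE : ((absz w)%:R : RR) = kt%:R - z%:~R by rewrite natr_absz ger0_norm.
  have Qw : Q (absz w).
    split; first by lia.
    exists c; apply: (onl_teq Hc).
    by rewrite zE /tau -Hz; field.
  have := Hkm _ Qw; rewrite -(ler_nat RR) zE => le.
  nra.
exists v, tau, ct; split.
- split.
  + move=> t [c [Hc Vc]].
    case: (lerP t (tau - 1)) => [le|lt1].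
      by have := F4 _ _ Hc le; rewrite /Vmon in Vc; rewrite Vc eqxx.
    case: (lerP t tau) => [le|lt2]; first exact: F5 Hc lt1 le.
    lra.
  + move=> e e0; exists v; split; last lra.
    exists cv; split; first exact: Hcv.
    by apply: (F3 _ _ Hcv vlo); apply: (F2 _ _ Hcv vhi).
- split.
  + exists ct; split; first exact: Hct.
    by apply: (F3 _ _ Hct _ Mct); rewrite /tau; lra.
  + by apply/andP; split; [|lra].
  + move=> t [c [Hc Vc]] /andP [lo hi].
    case: (lerP t tau) => // lt.
    have := F5 _ _ (onl_sub1 Hc) ltac:(lra) ltac:(lra); lra.
- exact: Hct.
- have M1 := H1 Mb fb.
  have := F1 _ _ (onl_teq (onl_add1 (onl0 dd b)) (add0r 1)) M1; lra.
- exact: Mct.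
Qed.

End Key.

Theorem mainTheorem12 (d n : nat) (h : 'I_n -> vec d) (dd : vec d)
  (f : {mpoly CC[d]}) (B : ('I_n -> nat) -> Prop) :
  (0 < d)%N ->
  dual_cone_facets h ->
  divisible_by_H h dd f ->
  dd != 0 ->
  inS h (- dd) ->
  compatibleB h dd B ->
  delta_fixed f dd (IB h f dd B) ->
  forall B' : ('I_n -> nat) -> Prop,
    compatibleB h dd B' ->
    (forall a, WB h B' a -> WB h B a) ->
    delta_fixed f dd (IB h f dd B').
Proof.
move=> _ [_ _ Hsc _] _ dd0 Hdd _ [HfA HfB] B' HcB' Hsub.
pose AB := fun a => Vprime f dd a /\ WB h B a.
pose AB' := fun a => Vprime f dd a /\ WB h B' a.
have [i0 Hi0] : exists i0, hval (h i0) dd < 0.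
  case: (pickP (fun i => hval (h i) dd < 0)) => [i Hi|H0]; first by exists i.
  case/eqP: dd0; apply: Hsc => i.
  have := Hdd i; rewrite hvalN oppr_ge0 => le.
  by apply/eqP; rewrite eq_le le /= leNgt H0.
have [j0 Hj0] : exists j0, dd 0 j0 != 0.
  case: (pickP (fun j => dd 0 j != 0)) => [j Hj|H0]; first by exists j.
  case/eqP: dd0; apply/matrixP => i j; rewrite (ord1 i) mxE.
  by have := H0 j; move/negbFE/eqP.
have HS : forall x, Mset h AB x -> inS h x.
  move=> x [g [[_ [beta [_ [Sg _]]]] Sxg]].
  by have := inSD Sg Sxg; rewrite addrC subrK.
have H1 : forall x, Mset h AB x -> eval_int f x != 0 -> Mset h AB (x + dd).
  move=> x Mx fx.
  have Im := HfA _ (monideal_mono (1 : CC) Mx).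
  apply: (monideal_supp Im).
  by rewrite /delta addrK eqxx mulr1.
have H2 : forall x, Mset h AB x -> eval_int f (x - dd) != 0.
  move=> x Mx.
  have [c' [_ Hc']] := HfB _ (monideal_mono (1 : CC) Mx).
  have := Hc' x; rewrite eqxx /delta.
  by case: eqP => // ->; rewrite mul0r => /eqP; rewrite eq_sym oner_eq0.
have sub : forall x, Mset h AB' x -> Mset h AB x.
  by move=> x [g [[Vg Wg] Sg]]; exists g; split => //; split => //; apply: Hsub.
have G1 : forall x, Mset h AB' x -> eval_int f x != 0 -> Mset h AB' (x + dd).
  move=> x Mx' fx.
  have [v [tau [c [Hinf Hpval Hc tau1 Mc]]]] :=
    key Hdd Hi0 Hj0 HS H1 H2 (sub _ Mx') fx.
  have [g [[Vg [beta [Bb [Sg Wg]]]] Sxg]] := Mx'.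
  exists c; split; last first.
    exact: (onl_S Hdd Hc (onl_teq (onl_add1 (onl0 dd x)) (add0r 1)) tau1).
  split.
    by exists x, v, tau; split => // j; rewrite -Hc.
  exists beta; split => //; split; first exact: HS.
  move=> i; case: (HcB' _ Bb i) => [->|hz]; first by have := HS _ Mc i.
  have E := onl_hval (h i) Hc; rewrite hz mulr0 addr0 in E.
  rewrite (intr_inj E).
  have := Wg i; have := Sxg i; rewrite hvalB; lia.
split.
- move=> c Ic.
  have [s Hs] := monideal_fin Ic.
  apply: (@monideal_char _ _ h AB' [seq y + dd | y <- s]) => x;
    rewrite /delta mulf_eq0 negb_or => /andP [nf nc].
    by rewrite -(subrK dd x); apply: map_f; apply: Hs.
  by have := G1 _ (monideal_supp Ic nc) nf; rewrite subrK.
- move=> c Ic.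
  have [s Hs] := monideal_fin Ic.
  exists (fun y => c (y + dd) / eval_int f y); split.
    apply: (@monideal_char _ _ h AB' [seq y - dd | y <- s]) => x;
      rewrite mulf_eq0 negb_or => /andP [nc _].
      by rewrite -(addrK dd x); apply: map_f; apply: Hs.
    by have := Mset_add (monideal_supp Ic nc) Hdd; rewrite addrK.
  move=> b; rewrite /delta subrK.
  case: (c b =P 0) => [->|nz]; first by rewrite mul0r mulr0.
  have fz := H2 _ (sub _ (monideal_supp Ic (introN eqP nz))).
  by rewrite mulrC divfK.
Qed.
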